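(* Let $n\ge 1$ and let $y\in\mathbb{R}^n$ satisfy $y_1\ge y_2\ge\cdots\ge y_n\ge 0$ and $y_1>0$. Define $f:(0,+\infty)\to\mathbb{R}$ by $$f(\lambda)=\sum_{i=1}^n \max\left\{1,\left(y_i/\sqrt{\lambda}\right)^2\right\}.$$ The function $f$ is continuous and strictly decreasing on $(0,y_1^2]$, with $f(\lambda)\to+\infty$ as $\lambda\to 0^+$ and $f(y_1^2)=n$. Let $C\ge\sqrt{n}$, let $\lambda(C)$ be the unique $\lambda\in(0,y_1^2]$ with $f(\lambda)=C^2$, and let $k(C)$ be the maximum index $k$ such that $y_k>\sqrt{\lambda(C)}$. Then $$\min_{q\in\mathcal{Q}}\ \max_{\sigma\in\mathbb{R}^n,\ \|\sigma\|_2\le 1}\ \sum_{i=1}^n\left(\sigma_i\frac{y_i}{q_i}\right)^2=\lambda(C),\qquad \mathcal{Q}=\{q\in\mathbb{R}^n:\ q_i\ge 1\ \forall i,\ \|q\|_2\le C\},$$ and the minimum over $q$ is attained by $$q_k=\begin{cases} y_k/\sqrt{\lambda(C)} & \text{if } k\le k(C),\\ 1 & \text{otherwise.}\end{cases}$$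
   Context: Here $\|\cdot\|_2$ is the Euclidean norm. In the paper, $y$ is a vector of nonnegative node ''centralities'' (e.g. column norms of a matrix $(I-\Lambda)^{-1}D$, or the vector $n^{-1}((I-\Lambda)^{-1}D)'\mathbf{1}$), $q$ is a protection vector and $\sigma$ a vector of shock standard deviations. *)

(* Defs.v *)
From HB Require Import structures.
From mathcomp Require Import all_boot all_order all_algebra.
From mathcomp Require Import all_classical all_reals all_analysis.
Set Implicit Arguments. Unset Strict Implicit. Unset Printing Implicit Defensive.
Import Order.TTheory GRing.Theory Num.Theory.
Import numFieldNormedType.Exports.
Local Open Scope ring_scope.

(* Vectors in R^m are functions 'I_m -> R; index i : 'I_m is the paper's i+1. *)

Definition norm2 (R : realType) (m : nat) (v : 'I_m -> R) : R :=
  Num.sqrt (\sum_(i < m) v i ^+ 2).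

Definition fC (R : realType) (m : nat) (y : 'I_m -> R) (lam : R) : R :=
  \sum_(i < m) Num.max 1 ((y i / Num.sqrt lam) ^+ 2).

Definition Qset (R : realType) (m : nat) (C : R) : set ('I_m -> R) :=
  [set q | (forall i, 1 <= q i) /\ norm2 q <= C].

Definition obj (R : realType) (m : nat) (y q sigma : 'I_m -> R) : R :=
  \sum_(i < m) (sigma i * (y i / q i)) ^+ 2.

Definition is_inner_max (R : realType) (m : nat) (y q : 'I_m -> R) (v : R) : Prop :=
  (exists sigma : 'I_m -> R, norm2 sigma <= 1 /\ obj y q sigma = v) /\
  (forall sigma : 'I_m -> R, norm2 sigma <= 1 -> obj y q sigma <= v).

(* k(C): the maximum (1-based) index k with y_k > sqrt lambda; 0 if none *)
Definition kC (R : realType) (m : nat) (y : 'I_m -> R) (lam : R) : nat :=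
  \max_(i < m | Num.sqrt lam < y i) i.+1.

(* the optimal protection vector; 0-based i corresponds to k = i+1 *)
Definition qstar (R : realType) (m : nat) (y : 'I_m -> R) (lam : R) : 'I_m -> R :=
  fun i => if (i.+1 <= kC y lam)%N then y i / Num.sqrt lam else 1.

(* Main.v *)
Require Import Defs.
From HB Require Import structures.
From mathcomp Require Import all_boot all_order all_algebra.
From mathcomp Require Import all_classical all_reals all_analysis.
From mathcomp Require Import ring lra.
Import Order.TTheory GRing.Theory Num.Theory.
Import numFieldNormedType.Exports.
Local Open Scope classical_set_scope.
Local Open Scope ring_scope.

Lemma fC_cont (R : realType) m (y : 'I_m -> R) x : 0 < x -> {for x, continuous (fC y)}.
Proof.
move=> x0; rewrite /fC.
apply: (@cvg_big _ _ +%R 0 xpredT); first exact: add_continuous.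
move=> i _.
apply: (@continuous_max _ _ (fun=> 1) (fun t => (y i / Num.sqrt t) ^+ 2)).
  exact: cvg_cst.
have h : {for x, continuous (fun t => y i / Num.sqrt t)}.
  apply: cvgM; first exact: cvg_cst.
  apply: cvgV; first by rewrite sqrtr_eq0 -ltNge.
  exact: sqrt_continuous.
exact: (cvgM h h).
Qed.

Lemma sqdiv (R : realType) (a l : R) : 0 < l -> (a / Num.sqrt l) ^+ 2 = a ^+ 2 / l.
Proof. by move=> l0; rewrite expr_div_n sqr_sqrtr // ltW. Qed.

Lemma fCE (R : realType) m (y : 'I_m -> R) l : 0 < l ->
  fC y l = \sum_(i < m) Num.max 1 (y i ^+ 2 / l).
Proof. by move=> l0; apply: eq_bigr => i _; rewrite sqdiv. Qed.

Lemma maxle (R : realType) (u w : R) : u <= w -> Num.max 1 u <= Num.max 1 w.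
Proof. by move=> h; rewrite ge_max !le_max lexx /= h orbT. Qed.

Lemma fC_decr (R : realType) n (y : 'I_n.+1 -> R) (hpos : 0 < y ord0) a b :
  0 < a -> a < b -> b <= y ord0 ^+ 2 -> fC y b < fC y a.
Proof.
move=> a0 ab by0.
have b0 : 0 < b by apply: lt_trans ab.
have y20 : 0 < y ord0 ^+ 2 by rewrite exprn_gt0.
rewrite !fCE // (bigD1 ord0) // [X in _ < X](bigD1 ord0) //=.
apply: ltr_leD.
  have h1 : 1 <= y ord0 ^+ 2 / b by rewrite ler_pdivlMr // mul1r.
  have h2 : y ord0 ^+ 2 / b < y ord0 ^+ 2 / a.
    by rewrite ltr_pM2l // ltf_pV2 ?posrE.
  rewrite max_r // max_r //; exact: le_trans (ltW h2).
apply: ler_sum => i _; apply: maxle.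
by rewrite ler_wpM2l ?sqr_ge0 // lef_pV2 ?posrE // ltW.
Qed.

Lemma fC_lower (R : realType) n (y : 'I_n.+1 -> R) l : 0 < l ->
  y ord0 ^+ 2 / l <= fC y l.
Proof.
move=> l0; rewrite fCE // (bigD1 ord0) //=.
rewrite -[X in X <= _]addr0; apply: lerD; first by rewrite le_max lexx orbT.
apply: sumr_ge0 => i _; rewrite le_max ler01 //.
Qed.

Lemma fC_top (R : realType) n (y : 'I_n.+1 -> R)
  (hmono : forall i j : 'I_n.+1, (i <= j)%N -> y j <= y i)
  (hnonneg : forall i, 0 <= y i) (hpos : 0 < y ord0) :
  fC y (y ord0 ^+ 2) = n.+1%:R.
Proof.
rewrite fCE ?exprn_gt0 //.
rewrite (eq_bigr (fun=> 1)) ?sumr_const ?card_ord //.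
move=> i _; rewrite max_l //.
have y20 : 0 < y ord0 ^+ 2 by rewrite exprn_gt0.
rewrite ler_pdivrMr // mul1r.
have := hmono ord0 i isT; have := hnonneg i; nra.
Qed.


Lemma fC_lim (R : realType) n (y : 'I_n.+1 -> R) (hpos : 0 < y ord0) :
  fC y x @[x --> 0^'+] --> +oo.
Proof.
apply/cvgryPge => M.
have y20 : 0 < y ord0 ^+ 2 by rewrite exprn_gt0.
have M1 : 0 < `|M| + 1 by rewrite ltr_wpDl.
set e := y ord0 ^+ 2 / (`|M| + 1).
have e0 : 0 < e by rewrite divr_gt0.
near=> x.
have x0 : 0 < x by near: x; exact: nbhs_right_gt.
have xe : x < e by near: x; exact: nbhs_right_lt.
apply: (@le_trans _ _ (y ord0 ^+ 2 / x)); last exact: fC_lower.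
rewrite ler_pdivlMr //.
move: xe; rewrite /e ltr_pdivlMr // => h.
have hM : M <= `|M| by exact: ler_norm.
have := normr_ge0 M.
nra.
Unshelve. all: by end_near. Qed.

Definition ev (R : realType) m (j : 'I_m) : 'I_m -> R := fun i => if i == j then 1 else 0.

Arguments ev R {m} j.

Lemma norm2_ev (R : realType) m (j : 'I_m) : norm2 (ev R j) = 1.
Proof.
rewrite /norm2 (bigD1 j) //= big1 => [|i /negbTE hi]; last by rewrite /ev hi expr0n.
by rewrite /ev eqxx expr1n addr0 sqrtr1.
Qed.

Lemma obj_ev (R : realType) m (y q : 'I_m -> R) (j : 'I_m) :
  obj y q (ev R j) = (y j / q j) ^+ 2.
Proof.
rewrite /obj (bigD1 j) //= big1 => [|i /negbTE hi]; last by rewrite /ev hi mul0r expr0n.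
by rewrite /ev eqxx mul1r addr0.
Qed.

Lemma obj_ub (R : realType) m (y q sigma : 'I_m -> R) M :
  (forall i, (y i / q i) ^+ 2 <= M) -> 0 <= M -> norm2 sigma <= 1 -> obj y q sigma <= M.
Proof.
move=> hM M0 hs.
have hS : \sum_(i < m) sigma i ^+ 2 <= 1.
  have : Num.sqrt (\sum_(i < m) sigma i ^+ 2) <= Num.sqrt 1 by rewrite sqrtr1.
  by rewrite ler_sqrt.
apply: (@le_trans _ _ (\sum_(i < m) sigma i ^+ 2 * M)).
  apply: ler_sum => i _; rewrite exprMn; apply: ler_wpM2l; first exact: sqr_ge0.
  exact: hM.
rewrite -mulr_suml; nra.
Qed.

Lemma inner_exists (R : realType) n (y q : 'I_n.+1 -> R) : exists v, is_inner_max y q v.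
Proof.
have [j _ Hj] := @arg_maxP _ R _ ord0 xpredT (fun i => (y i / q i) ^+ 2) isT.
exists ((y j / q j) ^+ 2); split.
  by exists (ev R j); rewrite norm2_ev obj_ev.
move=> s hs; apply: obj_ub => //; last exact: sqr_ge0.
by move=> i; apply: Hj.
Qed.


Lemma kC_iff (R : realType) m (y : 'I_m -> R)
  (hmono : forall i j : 'I_m, (i <= j)%N -> y j <= y i) lam (i : 'I_m) :
  (i.+1 <= kC y lam)%N = (Num.sqrt lam < y i).
Proof.
apply/idP/idP; last first.
  by move=> h; rewrite /kC; apply: leq_bigmax_cond.
rewrite /kC; apply: contraLR; rewrite -leNgt => hle; rewrite -ltnNge ltnS.
apply/bigmax_leqP => j hj; rewrite ltnNge; apply/negP => hij.
by rewrite ltNge (le_trans (hmono _ _ hij) hle) in hj.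
Qed.

Section Q.
Variables (R : realType) (m : nat) (y : 'I_m -> R).
Hypothesis hmono : forall i j : 'I_m, (i <= j)%N -> y j <= y i.
Hypothesis hnonneg : forall i, 0 <= y i.
Variable lam : R.
Hypothesis lam0 : 0 < lam.

Let s := Num.sqrt lam.
Let s0 : 0 < s. Proof. by rewrite sqrtr_gt0. Qed.
Let s2 : s ^+ 2 = lam. Proof. by rewrite sqr_sqrtr // ltW. Qed.

Lemma qstarE i : qstar y lam i = if s < y i then y i / s else 1.
Proof. by rewrite /qstar kC_iff. Qed.

Lemma Q1 i : 1 <= qstar y lam i.
Proof.
rewrite qstarE; case: ifP => h //.
by rewrite ler_pdivlMr // mul1r ltW.
Qed.

Lemma Q2 i : qstar y lam i ^+ 2 = Num.max 1 ((y i / s) ^+ 2).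
Proof.
rewrite qstarE; case: ifP => h.
  have : 1 <= y i / s by rewrite ler_pdivlMr // mul1r ltW.
  move=> h1; rewrite max_r //; nra.
move/negbT: h; rewrite -leNgt => h.
have : y i / s <= 1 by rewrite ler_pdivrMr // mul1r.
have : 0 <= y i / s by rewrite divr_ge0 // ltW.
move=> h1 h2; rewrite max_l ?expr1n //; nra.
Qed.

Lemma Q4 i : s < y i -> (y i / qstar y lam i) ^+ 2 = lam.
Proof.
move=> h; rewrite qstarE h invf_div mulrC divfK //.
by apply: lt0r_neq0; apply: lt_trans h.
Qed.

Lemma Q3 i : (y i / qstar y lam i) ^+ 2 <= lam.
Proof.
case: (ltP s (y i)) => h; first by rewrite Q4.
rewrite qstarE ltNge h /= divr1 -s2.
have := hnonneg i; nra.
Qed.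

End Q.


Lemma minmax_lemma (R : realType) (a b c : R) :
  b <= c -> c <= a -> Num.min a b <= c <= Num.max a b.
Proof. by move=> h1 h2; rewrite ge_min le_max h1 h2 !orbT. Qed.

Theorem theorem1 (R : realType) (n : nat) (y : 'I_n.+1 -> R)
  (hmono : forall i j : 'I_n.+1, (i <= j)%N -> y j <= y i)
  (hnonneg : forall i, 0 <= y i)
  (hpos : 0 < y ord0) :
  {within `]0, y ord0 ^+ 2], continuous fC y} /\
  {in `]0, y ord0 ^+ 2] &, forall a b, a < b -> fC y b < fC y a} /\
  (fC y x @[x --> 0^'+] --> +oo) /\
  fC y (y ord0 ^+ 2) = n.+1%:R /\
  forall C : R, Num.sqrt n.+1%:R <= C ->
    (exists! lam : R, 0 < lam <= y ord0 ^+ 2 /\ fC y lam = C ^+ 2) /\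
    forall lam : R, 0 < lam <= y ord0 ^+ 2 -> fC y lam = C ^+ 2 ->
      (forall q, Qset C q -> exists v, is_inner_max y q v) /\
      Qset C (qstar y lam) /\
      is_inner_max y (qstar y lam) lam /\
      (forall q v, Qset C q -> is_inner_max y q v -> lam <= v).
Proof.
have y20 : 0 < y ord0 ^+ 2 by rewrite exprn_gt0.
split.
  apply: continuous_in_subspaceT => t; rewrite inE /= in_itv /= => /andP[t0 _].
  exact: fC_cont.
split.
  move=> a b; rewrite !in_itv /= => /andP[a0 _] /andP[_ b1] ab.
  exact: fC_decr.
split; first exact: fC_lim.
split; first exact: fC_top.
move=> C hC.
have C0 : 0 <= C by apply: le_trans hC; exact: sqrtr_ge0.
have hC2 : n.+1%:R <= C ^+ 2.
  have h := sqr_sqrtr (ler0n R n.+1).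
  have := sqrtr_ge0 (n.+1%:R : R).
  move: h hC; set t := Num.sqrt _; nra.
split.
  set e := y ord0 ^+ 2 / (C ^+ 2 + 1).
  have Cp : 0 < C ^+ 2 + 1 by rewrite ltr_wpDl ?sqr_ge0.
  have e0 : 0 < e by rewrite divr_gt0.
  have ey : e <= y ord0 ^+ 2.
    by rewrite ler_pdivrMr //; have := sqr_ge0 C; nra.
  have fe : C ^+ 2 <= fC y e.
    apply: (@le_trans _ _ (y ord0 ^+ 2 / e)); last exact: fC_lower.
    have -> : y ord0 ^+ 2 / e = C ^+ 2 + 1.
      rewrite /e; field; apply/andP; split; exact: lt0r_neq0.
    by rewrite lerDl.
  have [c hc fc] : exists2 c, c \in `[e, y ord0 ^+ 2] & fC y c = C ^+ 2.
    apply: IVT => //.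
      apply: continuous_in_subspaceT => t; rewrite inE /= in_itv /= => /andP[t0 _].
      by apply: fC_cont; apply: lt_le_trans t0.
    by rewrite fC_top //; apply: minmax_lemma.
  move: hc; rewrite in_itv /= => /andP[ec cy].
  have c0 : 0 < c by apply: lt_le_trans ec.
  exists c; split; first by rewrite c0 cy fc.
  move=> x [/andP[x0 xy] fx].
  case: (ltgtP c x) => // h.
    by have := @fC_decr R n y hpos c x c0 h xy; rewrite fx fc ltxx.
  by have := @fC_decr R n y hpos x c x0 h cy; rewrite fx fc ltxx.
move=> lam /andP[lam0 laml] flam.
have s0 : 0 < Num.sqrt lam by rewrite sqrtr_gt0.
have s2 : Num.sqrt lam ^+ 2 = lam by rewrite sqr_sqrtr // ltW.
split; first by move=> q _; exact: inner_exists.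
split.
  split; first by move=> i; apply: (@Q1 R _ y hmono lam lam0).
  rewrite /norm2 (eq_bigr _ (fun i _ => @Q2 R _ y hmono hnonneg lam lam0 i)).
  rewrite [X in Num.sqrt X](_ : _ = fC y lam) // flam sqrtr_sqr ger0_norm //.
split.
  split.
    exists (ev R ord0); rewrite norm2_ev obj_ev; split => //.
    case: (ltP (Num.sqrt lam) (y ord0)) => h; first exact: (@Q4 R _ y hmono lam lam0).
    have hsy : Num.sqrt lam <= y ord0.
      by rewrite -(ger0_norm (ltW hpos)) -sqrtr_sqr ler_sqrt // ltW.
    have -> : y ord0 = Num.sqrt lam by apply/eqP; rewrite eq_le h hsy.
    by rewrite (@qstarE R _ y hmono) ltNge h /= divr1.
  move=> sg hs; apply: obj_ub => //; last exact: ltW.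
  by move=> i; apply: (@Q3 R _ y hmono hnonneg lam lam0).
move=> q v [hq1 hqn] [_ hub].
have hi : forall i, (y i / q i) ^+ 2 <= v.
  by move=> i; rewrite -obj_ev; apply: hub; rewrite norm2_ev.
have q0 : forall i, 0 < q i by move=> i; apply: lt_le_trans (hq1 i).
rewrite leNgt; apply/negP => hvl.
have v0 : 0 < v.
  by apply: lt_le_trans (hi ord0); rewrite exprn_gt0 // divr_gt0.
have hqi : forall i, y i ^+ 2 / v <= q i ^+ 2.
  move=> i; have := hi i; rewrite expr_div_n ler_pdivrMr ?exprn_gt0 //.
  by rewrite ler_pdivrMr // mulrC.
have hlt : fC y lam < \sum_(i < n.+1) q i ^+ 2.
  rewrite fCE // (bigD1 ord0) // [X in _ < X](bigD1 ord0) //=.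
  apply: ltr_leD.
    rewrite max_r; last by rewrite ler_pdivlMr // mul1r.
    apply: lt_le_trans (hqi ord0).
    by rewrite ltr_pM2l // ltf_pV2 ?posrE.
  apply: ler_sum => i _; rewrite ge_max; apply/andP; split.
    by have := hq1 i; nra.
  apply: le_trans (hqi i).
  by rewrite ler_wpM2l ?sqr_ge0 // lef_pV2 ?posrE // ltW.
have hle : \sum_(i < n.+1) q i ^+ 2 <= C ^+ 2.
  move: hqn; rewrite /norm2.
  have S0 : 0 <= \sum_(i < n.+1) q i ^+ 2 by apply: sumr_ge0 => i _; exact: sqr_ge0.
  have := sqr_sqrtr S0.
  have := sqrtr_ge0 (\sum_(i < n.+1) q i ^+ 2).
  set t := Num.sqrt _; set S := \sum_(i < n.+1) _; nra.
by have := lt_le_trans hlt hle; rewrite flam ltxx.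
Qed.
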